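(* Let $f$ be a nonzero polynomial and write its multiset of reproducible zeros as $$R(f)=\{\underbrace{\beta_1,\dots,\beta_1}_{r_1},\underbrace{\beta_2,\dots,\beta_2}_{r_2},\dots,\underbrace{\beta_n,\dots,\beta_n}_{r_n}\}$$ with $\beta_1,\dots,\beta_n$ distinct. Then $$[f]=\Big[\prod_{\beta\in R(f)}(z-\beta)\Big]=\Big(\operatorname{span}\big\{k_{\beta_j}^{(\ell)}:0\le\ell\le r_j-1,\ 1\le j\le n\big\}\Big)^{\perp},$$ where the product is taken over $R(f)$ with multiplicity (and equals $1$ if $R(f)$ is empty).
   Context: Standing assumptions: $\Omega\subset\mathbb C$ is a domain with $0\in\Omega$, $\mathcal H$ is a Hilbert space of analytic functions on $\Omega$ with bounded point evaluations at points of $\Omega$, the shift $(Sf)(z)=zf(z)$ is bounded on $\mathcal H$, and the polynomials $\mathcal P$ are dense in $\mathcal H$. For $g\in\mathcal H$, $[g]$ is the closure in $\mathcal H$ of $\operatorname{span}\{z^kg:k\ge0\}$. A point $\beta\in\mathbb C$ is reproducible of order $m\ge0$ if $p\mapsto p^{(m)}(\beta)$ on $\mathcal P$ extends to a bounded linear functional on $\mathcal H$; $k_\beta^{(m)}\in\mathcal H$ is the element representing this extension, $\langle g,k_\beta^{(m)}\rangle=g^{(m)}(\beta)$. $\beta$ is a reproducible point if reproducible of order $0$; reproducibility of order $m$ implies that of all orders $j\le m$; $\operatorname{ro}(\beta)\in\{0,1,\dots\}\cup\{\infty\}$ is the supremum of orders of reproducibility. For a nonzero polynomial $p$, $R(p)$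 is the multiset of reproducible zeros: each reproducible point $\beta$ at which $p$ has a zero of order $m\ge1$ is listed $\min\{m,\operatorname{ro}(\beta)+1\}$ times; non-reproducible zeros are omitted. *)

(* Defs.v *)
(* Complex numbers are  R[i]  (mathcomp-real-closed)
   for an arbitrary  R : realType  (a model of the real numbers); the topology on
   R[i] is the canonical normed topology of the numFieldType  R[i]^o . *)
From HB Require Import structures.
From mathcomp Require Import all_boot all_order all_algebra.
From mathcomp Require Import complex.
From mathcomp Require Import all_classical all_reals topology normedtype derive.
Set Implicit Arguments. Unset Strict Implicit. Unset Printing Implicit Defensive.
Import Order.TTheory GRing.Theory Num.Theory.
Import numFieldNormedType.Exports numFieldTopology.Exports.
Local Open Scope classical_set_scope.
Local Open Scope ring_scope.

Section Defs.
Variable R : realType.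
Local Notation C := (R[i]).

(** The Hilbert space H is an abstract C-vector space  V  with an inner product  ip ;
  [ev v] is the analytic function on  Om  that the vector  v  is.  Norms are only
  used squared:  ||v||^2 = ip v v . *)

Definition domain0 (Om : set C^o) : Prop := open Om /\ connected Om /\ Om 0.

Definition is_elt (V : lmodType C) (ev : V -> C -> C) (Om : set C^o)
    (v : V) (g : C -> C) : Prop :=
  forall z, Om z -> ev v z = g z.

Definition is_poly_elt (V : lmodType C) (ev : V -> C -> C) (Om : set C^o)
    (v : V) (p : {poly C}) : Prop :=
  is_elt ev Om v (fun z => p.[z]).

Definition standing_assumptions (Om : set C^o) (V : lmodType C)
    (ip : V -> V -> C) (ev : V -> C -> C) (S : V -> V) : Prop :=
      domain0 Om /\
      (forall a u v w, ip (a *: u + v) w = a * ip u w + ip v w) /\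
      (forall u v, ip u v = (ip v u)^*) /\
      (forall v, 0 <= ip v v) /\
      (forall v, ip v v = 0 -> v = 0) /\
      (forall u : nat -> V,
          (forall e : C, 0 < e -> exists N, forall m n, (N <= m)%N -> (N <= n)%N ->
               ip (u m - u n) (u m - u n) < e) ->
          exists v, forall e : C, 0 < e -> exists N, forall n, (N <= n)%N ->
               ip (u n - v) (u n - v) < e) /\
      (forall a u v z, Om z -> ev (a *: u + v) z = a * ev u z + ev v z) /\
      (forall u v, (forall z, Om z -> ev u z = ev v z) -> u = v) /\
      (* the elements of H are analytic (complex differentiable) on Ω *)
      (forall v z, Om z -> derivable (ev v : C^o -> C^o) z 1) /\
        (forall z, Om z -> exists c : C, forall v, `|ev v z| ^+ 2 <= c * ip v v) /\
        (forall v, is_elt ev Om (S v) (fun z => z * ev v z)) /\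
        (exists c : C, forall v, ip (S v) (S v) <= c * ip v v) /\
        (forall p : {poly C}, exists v, is_poly_elt ev Om v p) /\
        (forall v (e : C), 0 < e -> exists p w, is_poly_elt ev Om w p /\
             ip (v - w) (v - w) < e).

Section Space.
Variables (Om : set C^o) (V : lmodType C) (ip : V -> V -> C) (ev : V -> C -> C)
  (S : V -> V).

Definition lspan (A : set V) : set V :=
  [set x | exists s : seq (C * V), (forall cv, cv \in s -> A cv.2) /\
                                   x = \sum_(cv <- s) cv.1 *: cv.2].

Definition hclosure (A : set V) : set V :=
  [set x | forall e : C, 0 < e -> exists y, A y /\ ip (x - y) (x - y) < e].

Definition orth (A : set V) : set V := [set x | forall y, A y -> ip x y = 0].

(** [g] = closure of span { z^k g : k >= 0 };  z^k g = S^k g. *)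
Definition cyc (g : V) : set V :=
  hclosure (lspan [set iter k S g | k in [set: nat]]).

(** β is reproducible of order m: p |-> p^(m)(β) is bounded on the polynomials
    (in the norm of H), i.e. extends to a bounded linear functional on H. *)
Definition reproducible (beta : C) (m : nat) : Prop :=
  exists c : C, forall (p : {poly C}) (v : V), is_poly_elt ev Om v p ->
    `|(p^`(m)).[beta]| ^+ 2 <= c * ip v v.

(** k represents the (bounded extension of the) functional p |-> p^(m)(β):
    <g, k> = g^(m)(β); on the dense set of polynomials this reads
    <p, k> = p^(m)(β), which determines k and the extension uniquely. *)
Definition is_kernel (beta : C) (m : nat) (k : V) : Prop :=
  forall (p : {poly C}) (v : V), is_poly_elt ev Om v p -> ip v k = (p^`(m)).[beta].

(** ro(β) >= n  (ro(β) = supremum of the orders of reproducibility). *)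
Definition ro_ge (beta : C) (n : nat) : Prop := exists j, (n <= j)%N /\ reproducible beta j.

(** Number of times β is listed in R(f): if β is reproducible and f has a zero of
    order m >= 1 at β, this is min{m, ro(β)+1} = #{ l < m | ro(β) >= l };
    otherwise 0. *)
Definition rmult (f : {poly C}) (beta : C) : nat :=
  if `[< reproducible beta 0 >] then
    #|[set l : 'I_(mup beta f) | `[< ro_ge beta l >] ]|
  else 0.

End Space.
End Defs.

(* Main.v *)
Require Import Defs.
From HB Require Import structures.
From mathcomp Require Import all_boot all_order all_algebra.
From mathcomp Require Import complex.
From mathcomp Require Import all_classical all_reals topology normedtype derive.
From mathcomp Require Import ring lra.
Import Order.TTheory GRing.Theory Num.Theory.
Import numFieldNormedType.Exports numFieldTopology.Exports.
Local Open Scope classical_set_scope.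
Local Open Scope complex_scope.
Local Open Scope ring_scope.

Set Implicit Arguments. Unset Strict Implicit. Unset Printing Implicit Defensive.

Lemma card_count (P : nat -> Prop) m :
  #|[set i : 'I_m | `[< P i >] ]| = count (fun i => `[< P i >]) (iota 0 m).
Proof.
have -> : #|[set i : 'I_m | `[< P i >] ]| = #|[set i : 'I_m | `[< P i >] ]%SET|.
  apply: eq_card => i; rewrite inE /=; apply/idP/idP => [|h]; rewrite in_setE //=; exact/asboolP.

rewrite -sum1dep_card.
rewrite -(big_mkord (fun i => `[< P i >]) (fun _ => 1%N)) sum1_count /index_iota subn0.
by [].
Qed.

Lemma count_down (P : nat -> bool) m : (forall a b, (a <= b)%N -> P b -> P a) ->
  forall l, (l < count P (iota 0 m))%N <-> (l < m)%N /\ P l.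
Proof.
move=> Pd; elim: m => [|m IH] l.
  by split => // -[].
have -> : iota 0 m.+1 = iota 0 m ++ [:: m] by rewrite -addn1 iotaD.
rewrite count_cat /= addn0.
case hm: (P m).
  have cm : count P (iota 0 m) = m.
    apply/eqP; rewrite eqn_leq; apply/andP; split.
      by have := count_size P (iota 0 m); rewrite size_iota.
    case: m IH hm => [|m'] IH hm; first by [].
    by apply/(IH m').2; split => //; exact: (Pd m' m'.+1 (leqnSn _) hm).
  have -> : (count P (iota 0 m) + true = m.+1)%N by rewrite cm; apply: addn1.
  rewrite ltnS; split => [h|[h _]] //; split => //.
  by apply: (Pd l m).
have -> : (count P (iota 0 m) + false = count P (iota 0 m))%N by apply: addn0.
rewrite IH ltnS; split => -[h1 h2]; split => //.
  exact: ltnW.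
rewrite leq_eqVlt in h1; case/orP: h1 => // /eqP el.
by rewrite el hm in h2.
Qed.
Section Hilb.
Variable R : realType.
Local Notation C := (R[i]).
Variables (V : lmodType C) (ip : V -> V -> C).
Hypothesis ipL : forall a u v w, ip (a *: u + v) w = a * ip u w + ip v w.
Hypothesis ipC : forall u v, ip u v = (ip v u)^*.
Hypothesis ip_ge0 : forall v, 0 <= ip v v.
Hypothesis ip_eq0 : forall v, ip v v = 0 -> v = 0.

Definition n2 (z : C) : R := complex.Re (z * z^*).
Definition nrm (v : V) : R := complex.Re (ip v v).

Lemma n2E z : (n2 z)%:C = z * z^*.
Proof. by rewrite /n2 -normCK RRe_real // realX // normr_real. Qed.

Lemma n2_ge0 z : 0 <= n2 z.
Proof. by rewrite -ler0c n2E -normCK exprn_ge0. Qed.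

Lemma n2M x y : n2 (x * y) = n2 x * n2 y.
Proof. apply: complexI; rewrite rmorphM /= !n2E rmorphM /=; ring. Qed.

Lemma n2_eq0 z : n2 z = 0 -> z = 0.
Proof.
move=> h; have : (n2 z)%:C = 0 by rewrite h.
by rewrite n2E -normCK => /eqP; rewrite expf_eq0 /= normr_eq0 => /eqP.
Qed.

Lemma n2_0 : n2 0 = 0.
Proof. by apply: complexI; rewrite n2E mul0r. Qed.

Lemma CrealC (r : R) : r%:C \is Num.real.
Proof. by apply/complex_realP; exists r. Qed.

Lemma n2_real (r : R) : n2 r%:C = r ^+ 2.
Proof. by apply: complexI; rewrite n2E conj_Creal ?CrealC // rmorphM. Qed.

Lemma n2V x : n2 x^-1 = (n2 x)^-1.
Proof. by apply: complexI; rewrite fmorphV /= !n2E fmorphV /= invfM. Qed.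

Lemma ipvv v : ip v v = (nrm v)%:C.
Proof. by rewrite /nrm RRe_real // ger0_real. Qed.

Lemma nrm_ge0 v : 0 <= nrm v.
Proof. by rewrite -ler0c -ipvv. Qed.

Lemma nrm_eq0 v : nrm v = 0 -> v = 0.
Proof. by move=> h; apply: ip_eq0; rewrite ipvv h. Qed.

Lemma ip0l w : ip 0 w = 0.
Proof.
have := ipL 1 0 0 w; rewrite scaler0 addr0 mul1r => /eqP.
by rewrite -subr_eq0 opprD addrA subrr add0r oppr_eq0 => /eqP.
Qed.
Lemma ipDl u v w : ip (u + v) w = ip u w + ip v w.
Proof. by have := ipL 1 u v w; rewrite scale1r mul1r. Qed.
Lemma ipZl a u w : ip (a *: u) w = a * ip u w.
Proof. by have := ipL a u 0 w; rewrite addr0 ip0l addr0. Qed.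
Lemma ipNl u w : ip (- u) w = - ip u w.
Proof. by rewrite -scaleN1r ipZl mulN1r. Qed.
Lemma ipBl u v w : ip (u - v) w = ip u w - ip v w.
Proof. by rewrite ipDl ipNl. Qed.
Lemma ip0r w : ip w 0 = 0.
Proof. by rewrite ipC ip0l rmorph0. Qed.
Lemma ipDr u v w : ip w (u + v) = ip w u + ip w v.
Proof. by rewrite ipC ipDl rmorphD /= -!ipC. Qed.
Lemma ipZr a u w : ip w (a *: u) = a^* * ip w u.
Proof. by rewrite ipC ipZl rmorphM /= -ipC. Qed.
Lemma ipNr u w : ip w (- u) = - ip w u.
Proof. by rewrite ipC ipNl rmorphN /= -ipC. Qed.
Lemma ipBr u v w : ip w (u - v) = ip w u - ip w v.
Proof. by rewrite ipDr ipNr. Qed.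

Lemma nrm_par u v : nrm (u + v) + nrm (u - v) = 2 * nrm u + 2 * nrm v.
Proof.
apply: complexI; rewrite !rmorphD !rmorphM /= -!ipvv.
rewrite ?ipDl ?ipNl ?ipDr ?ipNr; ring.
Qed.

Lemma nrm_add u v : nrm (u + v) <= 2 * nrm u + 2 * nrm v.
Proof. by rewrite -nrm_par lerDl nrm_ge0. Qed.

Lemma nrmZ a v : nrm (a *: v) = n2 a * nrm v.
Proof.
by apply: complexI; rewrite rmorphM /= -ipvv n2E ipZl ipZr -ipvv; ring.
Qed.

Lemma nrmN v : nrm (- v) = nrm v.
Proof. by rewrite -scaleN1r nrmZ -(rmorphN1 (real_complex R)) n2_real sqrrN expr1n mul1r. Qed.

Lemma nrmB u v : nrm (u - v) = nrm (v - u).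
Proof. by rewrite -nrmN opprB. Qed.

Lemma nrm0 : nrm 0 = 0.
Proof. by rewrite /nrm ip0l. Qed.

Lemma CS u v : n2 (ip u v) <= nrm u * nrm v.
Proof.
have [v0|vn0] := eqVneq (nrm v) 0.
  by rewrite (nrm_eq0 v0) ip0r n2_0 nrm0 mulr0.
set a := ip u v; set N := nrm v.
have Np : 0 < N by rewrite lt_def vn0 nrm_ge0.
pose t := a / N%:C.
have h := nrm_ge0 (u - t *: v).
suff : (nrm (u - t *: v))%:C = (nrm u - n2 a / N)%:C.
  move/complexI=> e; rewrite e subr_ge0 ler_pdivrMr // in h.
have NC : N%:C != 0 by rewrite eq_complex /= negb_and vn0.
rewrite rmorphB rmorphM fmorphV /= n2E -!ipvv.
rewrite ?ipDl ?ipNl ?ipZl ?ipDr ?ipNr ?ipZr.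
rewrite (ipC v u) -/a (ipvv v) -/N /t rmorphM /= fmorphV /= (conj_Creal (CrealC N)).
by field.
Qed.


Variables (Om : set C^o) (ev : V -> C -> C) (S : V -> V).
Hypothesis evL : forall a u v z, Om z -> ev (a *: u + v) z = a * ev u z + ev v z.
Hypothesis ev_inj : forall u v, (forall z, Om z -> ev u z = ev v z) -> u = v.
Hypothesis S_elt : forall v, is_elt ev Om (S v) (fun z => z * ev v z).
Hypothesis S_bnd : exists c : C, forall v, ip (S v) (S v) <= c * ip v v.
Hypothesis poly_ex : forall p : {poly C}, exists v, is_poly_elt ev Om v p.

Definition Pv (p : {poly C}) : V := projT1 (cid (poly_ex p)).
Lemma PvP p : is_poly_elt ev Om (Pv p) p.
Proof. exact: (projT2 (cid (poly_ex p))). Qed.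

Lemma PvE p z : Om z -> ev (Pv p) z = p.[z].
Proof. exact: PvP. Qed.

Lemma Pv_uniq v p : is_poly_elt ev Om v p -> v = Pv p.
Proof. by move=> H; apply: ev_inj => z Hz; rewrite (H z Hz) (PvE p Hz). Qed.

Lemma ev0 z : Om z -> ev 0 z = 0.
Proof.
move=> Hz; have := evL 1 0 0 Hz; rewrite scaler0 addr0 mul1r => /eqP.
by rewrite -subr_eq0 opprD addrA subrr add0r oppr_eq0 => /eqP.
Qed.

Lemma PvL a p q : Pv (a *: p + q) = a *: Pv p + Pv q.
Proof.
by symmetry; apply: Pv_uniq => z Hz; rewrite evL // !PvE // hornerD hornerZ.
Qed.
Lemma Pv0 : Pv 0 = 0.
Proof. by symmetry; apply: Pv_uniq => z Hz; rewrite ev0 // horner0. Qed.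
Lemma PvD p q : Pv (p + q) = Pv p + Pv q.
Proof. by have := PvL 1 p q; rewrite !scale1r. Qed.
Lemma PvZ a p : Pv (a *: p) = a *: Pv p.
Proof. by have := PvL a p 0; rewrite !addr0 Pv0 addr0. Qed.
Lemma PvN p : Pv (- p) = - Pv p.
Proof. by rewrite -(scaleN1r p) PvZ scaleN1r. Qed.
Lemma PvB p q : Pv (p - q) = Pv p - Pv q.
Proof. by rewrite PvD PvN. Qed.
Lemma Pv_sum (I : Type) (r : seq I) (F : I -> {poly C}) :
  Pv (\sum_(i <- r) F i) = \sum_(i <- r) Pv (F i).
Proof.
elim: r => [|x r IH]; first by rewrite !big_nil Pv0.
by rewrite !big_cons PvD IH.
Qed.

Lemma PvS p : S (Pv p) = Pv ('X * p).
Proof.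
apply: Pv_uniq => z Hz; rewrite S_elt // PvE //.
by rewrite [X in _ = X.[_]]mulrC hornerMX mulrC.
Qed.

Lemma Piter k p : iter k S (Pv p) = Pv ('X^k * p).
Proof.
elim: k => [|k IH]; first by rewrite expr0 mul1r.
by rewrite iterS IH PvS mulrA -exprS.
Qed.

Lemma ReMr (c : C) (r : R) : complex.Re (c * r%:C) = complex.Re c * r.
Proof. by case: c => a b /=; rewrite mulr0 subr0. Qed.

Lemma S_bndR : exists cS : R, 0 <= cS /\ forall v, nrm (S v) <= cS * nrm v.
Proof.
case: S_bnd => c Hc; exists (Num.max (complex.Re c) 0); split.
  by rewrite le_max lexx orbT.
move=> v; have := Hc v; rewrite !ipvv lecE => /andP[_].
rewrite ReMr /= => h; apply: (le_trans h); apply: ler_wpM2r; first exact: nrm_ge0.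
by rewrite le_max lexx.
Qed.

Lemma mulbnd (h : {poly C}) :
  exists M : R, 0 <= M /\ forall p, nrm (Pv (h * p)) <= M * nrm (Pv p).
Proof.
case: S_bndR => cS [cS0 HS].
elim/poly_ind: h => [|h c [M [M0 HM]]].
  by exists 0; split => // p; rewrite mul0r Pv0 nrm0 mul0r.
exists (2 * M * cS + 2 * n2 c); split.
  by apply: addr_ge0; [apply: mulr_ge0; [apply: mulr_ge0|] |apply: mulr_ge0; [|apply: n2_ge0]].
move=> p.
have -> : (h * 'X + c%:P) * p = h * ('X * p) + c *: p by rewrite mulrDl mul_polyC mulrA.
rewrite PvD PvZ; apply: (le_trans (nrm_add _ _)); rewrite nrmZ.
have h1 := HM ('X * p); rewrite -PvS in h1.
have h2 := HS (Pv p).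
have h3 := nrm_ge0 (Pv p).
have h4 := n2_ge0 c.
have h5 : M * nrm (S (Pv p)) <= M * (cS * nrm (Pv p)) by apply: ler_wpM2l.
nra.
Qed.

Lemma nrm_sum n (F : nat -> V) :
  nrm (\sum_(i < n) F i) <= 2 ^+ n * \sum_(i < n) nrm (F i).
Proof.
elim: n => [|n IH]; first by rewrite !big_ord0 nrm0 mulr0.
rewrite !big_ord_recr /=; apply: (le_trans (nrm_add _ _)).
have s0 : 0 <= \sum_(i < n) nrm (F i) by apply: sumr_ge0 => i _; exact: nrm_ge0.
have e1 : 1 <= (2 : R) ^+ n by apply: exprn_ege1; lra.
have := nrm_ge0 (F n); rewrite exprS; nra.
Qed.

Definition tc (z : C) (p : {poly C}) (i : nat) : C := (p \Po ('X + z%:P))`_i.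

Lemma comp_shift_derivn (q : {poly C}) z i :
  (q \Po ('X - z%:P))^`(i) = q^`(i) \Po ('X - z%:P).
Proof.
elim: i => [|i IH]; first by rewrite !derivn0.
by rewrite !derivnS IH deriv_comp derivB derivX derivC subr0 mulr1.
Qed.

Lemma tc_deriv (p : {poly C}) (z : C) i : p^`(i).[z] = tc z p i *+ i`!.
Proof.
have := comp_shift_derivn (p \Po ('X + z%:P)) z i; rewrite comp_polyXaddC_K => ->.
by rewrite horner_comp hornerXsubC subrr horner_coef0 coef_derivn addn0 ffactnn.
Qed.

Lemma shiftX (z : C) : ('X - z%:P) \Po ('X + z%:P) = 'X.
Proof. by rewrite comp_polyB comp_polyX comp_polyC addrK. Qed.

Lemma tc_XsubCn j (h : {poly C}) (z : C) l :
  tc z (('X - z%:P) ^+ j * h) l = if (l < j)%N then 0 else tc z h (l - j).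
Proof.
by rewrite /tc comp_polyM (rmorphXn (comp_poly ('X + z%:P))) /= shiftX coefXnM.
Qed.

Lemma tc0 (h : {poly C}) (z : C) : tc z h 0 = h.[z].
Proof. by rewrite /tc -horner_coef0 horner_comp hornerD hornerX hornerC add0r. Qed.

Lemma tc_XsubC (h : {poly C}) (z : C) l : tc z (('X - z%:P) * h) l.+1 = tc z h l.
Proof. by have := tc_XsubCn 1 h z l.+1; rewrite expr1 /= subn1. Qed.

Lemma comp_wide (t q : {poly C}) n : (size t <= n)%N ->
  t \Po q = \sum_(i < n) t`_i *: q ^+ i.
Proof.
move=> hs; rewrite comp_polyE (big_ord_widen n (fun i => t`_i *: q ^+ i) hs).
rewrite big_mkcond /=; apply: eq_bigr => i _; case: ifP => // /negbT.
by rewrite -leqNgt => /(nth_default 0) ->; rewrite scale0r.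
Qed.

Lemma taylor_split (p : {poly C}) (z : C) j : exists r : {poly C},
  p = \sum_(i < j) tc z p i *: ('X - z%:P) ^+ i + ('X - z%:P) ^+ j * r
  /\ r.[z] = tc z p j.
Proof.
set q := p \Po ('X + z%:P).
exists (drop_poly j q \Po ('X - z%:P)); split; last first.
  by rewrite horner_comp hornerXsubC subrr horner_coef0 coef_drop_poly.
rewrite -{1}(comp_polyXaddC_K p z) -/q -{1}(poly_take_drop j q).
rewrite comp_polyD comp_polyM (rmorphXn (comp_poly ('X - z%:P))) /= comp_polyX.
rewrite [_ * ('X - _) ^+ _]mulrC; congr (_ + _).
rewrite (comp_wide _ (size_take_poly j q)); apply: eq_bigr => i _.
by rewrite coef_take_poly ltn_ord.
Qed.

Lemma n2_mulrn (x : C) k : n2 (x *+ k) = n2 x * (k%:R) ^+ 2.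
Proof. by rewrite -[x *+ k]mulr_natr n2M -(rmorph_nat (real_complex R)) n2_real. Qed.

Lemma n2_le_mulrn (x : C) k : (0 < k)%N -> n2 x <= n2 (x *+ k).
Proof.
move=> k0; rewrite n2_mulrn -{1}(mulr1 (n2 x)); apply: ler_wpM2l; first exact: n2_ge0.
by rewrite expr_ge1 // ler1n.
Qed.

Local Notation repr := (reproducible Om ip ev).

Lemma repr_real b m : repr b m ->
  exists c : R, 0 <= c /\ forall p, n2 (p^`(m).[b]) <= c * nrm (Pv p).
Proof.
case=> c Hc; exists (Num.max (complex.Re c) 0); split.
  by rewrite le_max lexx orbT.
move=> p; have := Hc p (Pv p) (PvP p).
rewrite normCK -n2E ipvv lecE => /andP[_]; rewrite ReMr /= => h.
apply: (le_trans h); apply: ler_wpM2r; first exact: nrm_ge0.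
by rewrite le_max lexx.
Qed.

Lemma real_repr b m (c : R) :
  (forall p, n2 (p^`(m).[b]) <= c * nrm (Pv p)) -> repr b m.
Proof.
move=> H; exists c%:C => p v Hv; rewrite (Pv_uniq Hv) normCK -n2E ipvv.
by rewrite -rmorphM lecR.
Qed.

Lemma n2_tc_le p z i : n2 (tc z p i) <= n2 (p^`(i).[z]).
Proof. by rewrite tc_deriv; apply: n2_le_mulrn; exact: fact_gt0. Qed.

Lemma repr_down b m : repr b m.+1 -> repr b m.
Proof.
case/repr_real=> c [c0 Hc]; case: (mulbnd ('X - b%:P)) => M [M0 HM].
apply: (@real_repr _ _ (c * M)) => p.
have e : (('X - b%:P) * p)^`(m.+1).[b] = p^`(m).[b] *+ m.+1.
  by rewrite !tc_deriv tc_XsubC factS mulnC mulrnA.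
apply: (le_trans (n2_le_mulrn _ (ltn0Sn m))); rewrite -e.
apply: (le_trans (Hc _)); rewrite -mulrA; apply: ler_wpM2l => //.
Qed.

Lemma repr_le b j l : repr b j -> (l <= j)%N -> repr b l.
Proof.
move=> h hl; move: h; rewrite -(subnK hl); elim: (j - l)%N => [|n IH] h //.
by apply: IH; apply: repr_down; rewrite addSn in h.
Qed.

Lemma repr_tcs z j : (forall i, (i < j)%N -> repr z i) ->
  exists c : R, 0 <= c /\ forall i p, (i < j)%N -> n2 (tc z p i) <= c * nrm (Pv p).
Proof.
elim: j => [|j IH] H; first by exists 0; split.
case: IH => [i hi|c [c0 Hc]]; first by apply: H; exact: ltnW.
case: (repr_real (H j (ltnSn j))) => c' [c'0 Hc'].
exists (Num.max c c'); split; first by rewrite le_max c0.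
move=> i p; rewrite ltnS leq_eqVlt => /orP[/eqP ->|hi].
  apply: (le_trans (n2_tc_le _ _ _)); apply: (le_trans (Hc' p)).
  by apply: ler_wpM2r; [exact: nrm_ge0|rewrite le_max lexx orbT].
apply: (le_trans (Hc i p hi)).
by apply: ler_wpM2r; [exact: nrm_ge0|rewrite le_max lexx].
Qed.

Definition approx (b c : {poly C}) :=
  forall e : R, 0 < e -> exists u, nrm (Pv b - Pv (c * u)) < e.
Definition nearv (x : V) (c : {poly C}) :=
  forall e : R, 0 < e -> exists u, nrm (x - Pv (c * u)) < e.

Lemma Pv_split x p q : x - Pv p = (x - Pv q) + Pv (q - p).
Proof. by rewrite PvB addrA subrK. Qed.

Lemma approx_mul b c d : approx b c -> approx (b * d) (c * d).
Proof.
move=> H e e0; case: (mulbnd d) => M [M0 HM].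
have M1 : 0 < M + 1 by lra.
case: (H (e / (M + 1))) => [|u Hu]; first exact: divr_gt0.
exists u; rewrite -PvB.
have -> : b * d - c * d * u = d * (b - c * u) by ring.
apply: (le_lt_trans (HM _)); rewrite PvB.
have h1 : M * nrm (Pv b - Pv (c * u)) <= M * (e / (M + 1)).
  by apply: ler_wpM2l => //; exact: ltW.
apply: (le_lt_trans h1); rewrite mulrA ltr_pdivrMr //; nra.
Qed.

Lemma near_approx x c c' : nearv x c -> approx c c' -> nearv x c'.
Proof.
move=> H1 H2 e e0.
case: (H1 (e / 4)) => [|u Hu]; first by apply: divr_gt0 => //; lra.
case: (mulbnd u) => M [M0 HM].
have M1 : 0 < M + 1 by lra.
case: (H2 (e / 4 / (M + 1))) => [|u' Hu'].
  by apply: divr_gt0 => //; apply: divr_gt0 => //; lra.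
exists (u' * u); rewrite (Pv_split _ _ (c * u)).
have -> : c * u - c' * (u' * u) = u * (c - c' * u') by ring.
apply: (le_lt_trans (nrm_add _ _)).
have h1 := HM (c - c' * u'); rewrite PvB in h1.
have h2 : M * nrm (Pv c - Pv (c' * u')) <= M * (e / 4 / (M + 1)).
  by apply: ler_wpM2l => //; exact: ltW.
have h3 : M * (e / 4 / (M + 1)) <= e / 4.
  rewrite mulrA ler_pdivrMr // mulrC ler_pM2l; [lra|exact: divr_gt0].
have := nrm_ge0 (Pv (u * (c - c' * u'))); lra.
Qed.

Lemma mup_split (d : {poly C}) z : d != 0 ->
  exists a, d = ('X - z%:P) ^+ (mup z d) * a /\ a.[z] != 0.
Proof.
move=> d0; set j := mup z d.
have hj : ('X - z%:P) ^+ j %| d by rewrite -mup_geq.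
exists (d %/ ('X - z%:P) ^+ j); split; first by rewrite mulrC divpK.
apply/negP => ra.
have : ('X - z%:P) ^+ j.+1 %| d.
  rewrite -(divpK hj) exprSr [X in _ %| X]mulrC; apply: dvdp_mul => //.
  by rewrite dvdp_XsubCl.
by rewrite -mup_geq // ltnn.
Qed.

Variable k : C -> nat -> V.
Hypothesis hk : forall beta m, repr beta m -> is_kernel Om ip ev beta m (k beta m).

Lemma ipk p z m : repr z m -> ip (Pv p) (k z m) = p^`(m).[z].
Proof. by move=> h; apply: (hk h); exact: PvP. Qed.

Lemma n2_gt0 (x : C) : x != 0 -> 0 < n2 x.
Proof.
move=> x0; rewrite lt_def n2_ge0 andbT; apply/eqP => h; move: x0.
by rewrite (n2_eq0 h) eqxx.
Qed.

Lemma stepA x d z : d != 0 -> repr z (mup z d) -> ip x (k z (mup z d)) = 0 ->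
  nearv x d -> nearv x (d * ('X - z%:P)).
Proof.
move=> d0 hr hx H e e0.
case: (mup_split z d0) => a [da az].
move: hr hx da; set j := mup z d => hr hx da.
set K := nrm (k z j); set D := nrm (Pv d); set A := n2 (a.[z] *+ j`!).
have K0 : 0 <= K by exact: nrm_ge0.
have D0 : 0 <= D by exact: nrm_ge0.
have A0 : 0 < A.
  rewrite /A n2_mulrn; apply: mulr_gt0; first exact: n2_gt0.
  by apply: exprn_gt0; rewrite ltr0n fact_gt0.
set t := K * D / A.
have t0 : 0 <= t by apply: divr_ge0 => //; [exact: mulr_ge0|exact: ltW].
set dl := e / (3 + 2 * t).
have B0 : 0 < 3 + 2 * t by lra.
have dl0 : 0 < dl by exact: divr_gt0.
have edl : dl * (3 + 2 * t) = e by rewrite /dl mulrC mulrA mulrC mulrA mulVf ?mul1r // gt_eqF.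
case: (H dl dl0) => u Hu.
set c := u.[z].
have hw : (u - c%:P) %/ ('X - z%:P) * ('X - z%:P) = u - c%:P.
  by apply: divpK; rewrite dvdp_XsubCl rootE hornerD hornerN hornerC subrr.
exists ((u - c%:P) %/ ('X - z%:P)).
have -> : d * ('X - z%:P) * ((u - c%:P) %/ ('X - z%:P)) = d * u - c *: d.
  by rewrite -mulrA (mulrC ('X - z%:P)) hw mulrBr (mulrC d c%:P) mul_polyC.
have -> : x - Pv (d * u - c *: d) = (x - Pv (d * u)) + c *: Pv d.
  by rewrite PvB PvZ opprB addrCA addrC.
apply: (le_lt_trans (nrm_add _ _)); rewrite nrmZ -/D.
have hip : ip (Pv (d * u)) (k z j) = c * (a.[z] *+ j`!).
  rewrite ipk // tc_deriv da -mulrA tc_XsubCn ltnn subnn tc0 hornerM -/c.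
  by rewrite mulrnAr mulrC.
have hip2 : ip (Pv (d * u)) (k z j) = ip (Pv (d * u) - x) (k z j).
  by rewrite ipBl hx subr0.
have hcs := CS (Pv (d * u) - x) (k z j).
rewrite -hip2 hip n2M -/K -/A nrmB in hcs.
have h1 : n2 c * A <= dl * K.
  apply: (le_trans hcs); apply: ler_wpM2r => //; exact: ltW.
have h2 : n2 c * D <= dl * t.
  rewrite /t mulrA mulrA ler_pdivlMr //.
  have := n2_ge0 c; nra.
have := nrm_ge0 (x - Pv (d * u)); nra.
Qed.

Lemma nrm_sub u v : nrm (u - v) <= 2 * nrm u + 2 * nrm v.
Proof. by rewrite -(nrmN v); exact: nrm_add. Qed.

Lemma rem_bnd z j (cR : R) : 0 <= cR ->
  (forall i p, (i < j)%N -> n2 (tc z p i) <= cR * nrm (Pv p)) ->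
  forall p, nrm (Pv (\sum_(i < j) tc z p i *: ('X - z%:P) ^+ i)) <=
    (2 ^+ j * (cR * \sum_(i < j) nrm (Pv (('X - z%:P) ^+ i)))) * nrm (Pv p).
Proof.
move=> cR0 Hc p; rewrite Pv_sum.
under eq_bigr do rewrite PvZ.
apply: (le_trans (nrm_sum j (fun i => tc z p i *: Pv (('X - z%:P) ^+ i)))).
rewrite -!mulrA; apply: ler_wpM2l; first by apply: exprn_ge0.
rewrite mulr_suml mulr_sumr; apply: ler_sum => i _.
rewrite nrmZ (mulrC (nrm (Pv _)) (nrm (Pv p))) mulrA; apply: ler_wpM2r; first exact: nrm_ge0.
by apply: Hc.
Qed.

Lemma peel z j a : a.[z] != 0 -> ~ repr z j -> (forall i, (i < j)%N -> repr z i) ->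
  approx (('X - z%:P) ^+ j * a) (('X - z%:P) ^+ j.+1 * a).
Proof.
move=> az hn hb e e0.
case: (mulbnd a) => Ca [Ca0 HCa].
case: (repr_tcs hb) => cR [cR0 HcR].
set NX := \sum_(i < j) nrm (Pv (('X - z%:P) ^+ i)).
have NX0 : 0 <= NX by apply: sumr_ge0 => i _; exact: nrm_ge0.
set M := 2 ^+ j * (cR * NX).
have M0 : 0 <= M by apply: mulr_ge0; [exact: exprn_ge0|exact: mulr_ge0].
set F := ((j`!)%:R : R) ^+ 2.
have F0 : 0 < F by apply: exprn_gt0; rewrite ltr0n fact_gt0.
set Q := Ca * 2 * (1 + M) * F.
have Q0 : 0 <= Q.
  apply: mulr_ge0; last exact: ltW.
  apply: mulr_ge0; last lra.
  apply: mulr_ge0 => //.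
set Cb := Q / e + 1.
have : ~ (forall p, n2 (p^`(j).[z]) <= Cb * nrm (Pv p)).
  by move=> h; apply: hn; exact: (real_repr h).
move=> /existsNP [p /negP]; rewrite -ltNge => hp.
case: (taylor_split p z j) => r [hpe hr].
move: hpe; set rem := \sum_(i < j) _ => hpe.
set tau := tc z p j.
set N := nrm (Pv p).
have N0 : 0 <= N by exact: nrm_ge0.
rewrite tc_deriv n2_mulrn -/tau -/F -/N in hp.
have T0 : 0 < n2 tau.
  rewrite lt_def n2_ge0 andbT; apply/eqP => h; rewrite h mul0r in hp.
  have : 0 <= Cb * N by apply: mulr_ge0 => //; apply: addr_ge0 => //; exact: divr_ge0 (ltW e0).
  lra.
have tau0 : tau != 0 by apply/eqP => h; rewrite h n2_0 ltxx in T0.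
have hu0 : (1 - tau^-1 *: r) %/ ('X - z%:P) * ('X - z%:P) = 1 - tau^-1 *: r.
  apply: divpK; rewrite dvdp_XsubCl rootE hornerD hornerN hornerZ hr hornerC.
  by rewrite mulVf // subrr.
exists ((1 - tau^-1 *: r) %/ ('X - z%:P)).
have prem : p - rem = ('X - z%:P) ^+ j * r by rewrite {1}hpe addrC addKr.
have -> : Pv (('X - z%:P) ^+ j * a) - Pv (('X - z%:P) ^+ j.+1 * a * ((1 - tau^-1 *: r) %/ ('X - z%:P)))
   = tau^-1 *: Pv (a * (p - rem)).
  rewrite -PvB -PvZ; congr Pv; rewrite prem.
  have -> : ('X - z%:P) ^+ j.+1 * a * ((1 - tau^-1 *: r) %/ ('X - z%:P)) =
    ('X - z%:P) ^+ j * a * ((1 - tau^-1 *: r) %/ ('X - z%:P) * ('X - z%:P)).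
    by rewrite exprSr; ring.
  by rewrite hu0 -!mul_polyC; ring.
rewrite nrmZ n2V.
have h1 : nrm (Pv (a * (p - rem))) <= Ca * (2 * N + 2 * (M * N)).
  apply: (le_trans (HCa _)); apply: ler_wpM2l => //; rewrite PvB.
  apply: (le_trans (nrm_sub _ _)); rewrite -/N.
  have := rem_bnd cR0 HcR p; rewrite -/NX -/M -/rem -/N; lra.
have h2 : (n2 tau)^-1 * nrm (Pv (a * (p - rem))) <= (n2 tau)^-1 * (Ca * (2 * N + 2 * (M * N))).
  by apply: ler_wpM2l => //; rewrite invr_ge0 ltW.
apply: (le_lt_trans h2); rewrite mulrC ltr_pdivrMr //.
have h3 : N * Q < e * (n2 tau * F).
  have : N * Q / e < n2 tau * F.
    apply: le_lt_trans hp; rewrite /Cb mulrDl mul1r mulrC mulrA; lra.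
  by rewrite ltr_pdivrMr // => h; rewrite (mulrC e).
have h4 : Ca * (2 * N + 2 * (M * N)) * F < e * n2 tau * F.
  by rewrite -mulrA; move: h3; rewrite /Q; nra.
by rewrite -(ltr_pM2r F0).
Qed.

Lemma gpeel z j a : a.[z] != 0 -> ~ repr z j ->
  approx (('X - z%:P) ^+ j * a) (('X - z%:P) ^+ j.+1 * a).
Proof.
move=> az hn.
have ex : exists l, ~~ `[< repr z l >] by exists j; apply/asboolPn.
case: (ex_minnP ex) => l0 hl0 hmin.
have hb : forall i, (i < l0)%N -> repr z i.
  move=> i hi; apply/asboolP; apply/negPn/negP => h.
  by have := hmin i h; rewrite leqNgt hi.
have hle : (l0 <= j)%N by apply: hmin; apply/asboolPn.
have [m ej] : exists m, j = (l0 + m)%N by exists (j - l0)%N; rewrite subnKC.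
have hl0' : ~ repr z l0 by apply/asboolPn.
have := approx_mul (('X - z%:P) ^+ m) (peel az hl0' hb).
have -> : ('X - z%:P) ^+ l0 * a * ('X - z%:P) ^+ m = ('X - z%:P) ^+ j * a.
  by rewrite ej exprD; ring.
have -> : ('X - z%:P) ^+ l0.+1 * a * ('X - z%:P) ^+ m = ('X - z%:P) ^+ j.+1 * a.
  by rewrite ej -addSn exprD; ring.
done.
Qed.

Hypothesis dense : forall v (e : C), 0 < e ->
  exists p w, is_poly_elt ev Om w p /\ ip (v - w) (v - w) < e.

Lemma near_const x (c : C) : c != 0 -> nearv x c%:P.
Proof.
move=> c0 e e0; case: (@dense x e%:C) => [|p [w [hw hlt]]]; first by rewrite ltcR.
exists (c^-1 *: p); rewrite mul_polyC scalerA mulfV // scale1r -(Pv_uniq hw).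
by rewrite ipvv ltcR in hlt.
Qed.

Local Notation Aset g := [set iter kk S (Pv g) | kk in [set: nat]].

Lemma Pv_lspan g u : lspan (Aset g) (Pv (g * u)).
Proof.
exists [seq (u`_i, iter i S (Pv g)) | i <- index_iota 0 (size u)]; split.
  by move=> cv /mapP [i _ ->] /=; exists i.
rewrite big_map big_mkord /=.
under eq_bigr => i _ do rewrite /= Piter.
rewrite -[in LHS](coefK u) poly_def mulr_sumr Pv_sum; apply: eq_bigr => i _.
by rewrite -scalerAr PvZ mulrC.
Qed.

Lemma lspan_Pv g y : lspan (Aset g) y -> exists u, y = Pv (g * u).
Proof.
case=> s [Hs ->]; elim: s Hs => [|cv s IH] Hs.
  by exists 0; rewrite big_nil mulr0 Pv0.
case: IH => [cv' h|u hu]; first by apply: Hs; rewrite in_cons h orbT.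
have [kk _ hkk] := Hs cv (mem_head _ _).
exists (cv.1 *: 'X^kk + u); rewrite big_cons hu -hkk Piter mulrDr PvD -scalerAr PvZ.
by rewrite mulrC.
Qed.

Lemma lspan_orth x (A : set V) : (forall y, A y -> ip x y = 0) -> orth ip (lspan A) x.
Proof.
move=> H y [s [Hs ->]]; elim: s Hs => [|cv s IH] Hs; first by rewrite big_nil ip0r.
rewrite big_cons ipDr ipZr H ?IH ?mulr0 ?addr0 //; first by move=> cv' h; apply: Hs; rewrite in_cons h orbT.
by apply: Hs; exact: mem_head.
Qed.

Lemma in_lspan (A : set V) y : A y -> lspan A y.
Proof.
move=> h; exists [:: (1, y)]; split; last by rewrite big_cons big_nil scale1r addr0.
by move=> cv; rewrite inE => /eqP ->.
Qed.

Lemma Cpos_Re (e : C) : 0 < e -> 0 < complex.Re e /\ e = (complex.Re e)%:C.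
Proof.
move=> e0; split; first by move: e0; rewrite ltcE => /andP[_].
by rewrite RRe_real // gtr0_real.
Qed.

Lemma near_cyc x g : nearv x g -> cyc ip S (Pv g) x.
Proof.
move=> H e e0; case: (Cpos_Re e0) => r0 er.
case: (H _ r0) => u hu; exists (Pv (g * u)); split; first exact: Pv_lspan.
by rewrite ipvv er ltcR.
Qed.

Lemma cyc_orth x g z l : cyc ip S (Pv g) x -> g != 0 -> repr z l ->
  (l < mup z g)%N -> ip x (k z l) = 0.
Proof.
move=> H g0 hr hl.
have hy : forall u, ip (Pv (g * u)) (k z l) = 0.
  move=> u; rewrite ipk // tc_deriv; case: (mup_split z g0) => a [ga _].
  by rewrite ga -mulrA tc_XsubCn hl mul0rn.
set K := nrm (k z l); set a := n2 (ip x (k z l)).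
have K0 : 0 <= K by exact: nrm_ge0.
have hb : forall eps : R, 0 < eps -> a <= eps * K.
  move=> eps eps0; case: (H eps%:C) => [|y [hly hy']]; first by rewrite ltcR.
  case: (lspan_Pv hly) => u yu.
  have e1 : ip x (k z l) = ip (x - y) (k z l) by rewrite ipBl yu hy subr0.
  rewrite /a e1.
  apply: (le_trans (CS _ _)); apply: ler_wpM2r => //.
  by move: hy'; rewrite ipvv ltcR => /ltW.
have a0 : a = 0.
  apply/eqP; rewrite eq_le n2_ge0 andbT; apply/negP => /negP; rewrite -ltNge => apos.
  have K1 : 0 < K + 1 by lra.
  have := hb (a / (K + 1)) (divr_gt0 apos K1).
  rewrite mulrC mulrA ler_pdivlMr // => h; nra.
exact: n2_eq0.
Qed.

Definition Kset (g : {poly C}) : set V :=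
  [set y | exists z l, [/\ repr z l, (l < mup z g)%N & y = k z l]].

Lemma mainA (g : {poly C}) : g != 0 -> cyc ip S (Pv g) = orth ip (lspan (Kset g)).
Proof.
move=> g0; apply/seteqP; split => x hx.
  apply: lspan_orth => y [z [l [hr hl ->]]]; exact: cyc_orth hx g0 hr hl.
have hxk : forall z l, repr z l -> (l < mup z g)%N -> ip x (k z l) = 0.
  by move=> z l hr hl; apply: hx; apply: in_lspan; exists z, l.
apply: near_cyc.
suff : forall n (d : {poly C}), (size d <= n)%N -> d %| g -> nearv x d by apply => //.
elim => [|n IH] d hs hd.
  move: hs; rewrite leqn0 size_poly_eq0 => /eqP d0.
  by move: hd g0; rewrite d0 dvd0p => ->.
have d0 : d != 0 by apply/eqP => d0; move: hd g0; rewrite d0 dvd0p => /eqP ->; rewrite eqxx.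
case: (leqP (size d) 1) => h1.
  rewrite (size1_polyC h1); apply: near_const.
  by apply/eqP => e; move: d0; rewrite (size1_polyC h1) e eqxx.
have : size d != 1 by rewrite gt_eqF.
case/closed_rootP => z rz.
have [d' hd'] : exists d', d = d' * ('X - z%:P).
  by exists (d %/ ('X - z%:P)); rewrite divpK // dvdp_XsubCl.
have d'0 : d' != 0 by apply/eqP => e; move: d0; rewrite hd' e mul0r eqxx.
have hs' : (size d' <= n)%N.
  move: hs; rewrite hd' size_mul ?polyXsubC_eq0 // size_XsubC addn2 /=.
  by rewrite ltnS.
have hdg' : d' %| g by apply: dvdp_trans hd; rewrite hd' dvdp_mulr.
have IH' := IH d' hs' hdg'.
case: (mup_split z d'0) => a [da az].
have hjg : (mup z d' < mup z g)%N.
  rewrite mup_geq //; apply: dvdp_trans hd; rewrite hd' exprSr.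
  by apply: dvdp_mul => //; rewrite -mup_geq.
rewrite hd'; case: (pselect (repr z (mup z d'))) => hr.
  exact: stepA d'0 hr (hxk _ _ hr hjg) IH'.
apply: (near_approx IH'); rewrite [X in approx X _]da.
have -> : d' * ('X - z%:P) = ('X - z%:P) ^+ (mup z d').+1 * a.
  by rewrite [in LHS]da -mulrA (mulrC a) mulrA -exprSr.
exact: gpeel az hr.
Qed.


Lemma ro_geP b l : ro_ge Om ip ev b l <-> repr b l.
Proof. by split => [[j [hl hr]]|h]; [exact: repr_le hr hl|exists l]. Qed.

Lemma rmult_lt (f : {poly C}) b l :
  (l < rmult Om ip ev f b)%N <-> repr b l /\ (l < mup b f)%N.
Proof.
rewrite /rmult; case: (pselect (repr b 0)) => h0.
  rewrite (asboolT h0) card_count count_down.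
    split=> -[h1 h2]; split => //; first by apply/ro_geP; exact/asboolP.
    by apply/asboolP; apply/ro_geP.
  move=> a c hac /asboolP [j [hj hr]]; apply/asboolP; exists j; split => //.
  exact: leq_trans hac hj.
rewrite (asboolF h0) ltn0; split => // -[hr _].
by exfalso; apply: h0; exact: repr_le hr (leq0n l).
Qed.

Lemma prod_neq0 (s : seq C) (e : C -> nat) :
  \prod_(b <- s) ('X - b%:P) ^+ e b != 0.
Proof.
rewrite prodf_seq_neq0; apply/allP => b _ /=.
by rewrite expf_neq0 // polyXsubC_eq0.
Qed.

Lemma mup_prod (s : seq C) (e : C -> nat) z : uniq s ->
  mup z (\prod_(b <- s) ('X - b%:P) ^+ e b) = if z \in s then e z else 0%N.
Proof.
elim: s => [|b s IH] /=.
  by rewrite big_nil mupNroot // root1.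
move=> /andP[bs us]; rewrite big_cons mupM ?prod_neq0 ?expf_neq0 ?polyXsubC_eq0 //.
rewrite mup_XsubCX IH // in_cons.
case: (eqVneq z b) => [->|zb] /=.
  by rewrite (negbTE bs) addn0.
by rewrite add0n.
Qed.

Lemma final (f : {poly C}) (s : seq C) : f != 0 -> uniq s ->
  (forall b, b \in s <-> (0 < rmult Om ip ev f b)%N) ->
  cyc ip S (Pv f) = cyc ip S (Pv (\prod_(b <- s) ('X - b%:P) ^+ rmult Om ip ev f b)) /\
  cyc ip S (Pv f) = orth ip (lspan [set x | exists beta l,
                 [/\ beta \in s, (l < rmult Om ip ev f beta)%N & x = k beta l]]).
Proof.
move=> f0 us hs.
set Ks := [set x | exists beta l, _].
have E1 : Kset f = Ks.
  apply/seteqP; split => y /=.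
    case=> z [l [hr hl ->]]; exists z, l.
    have hlt : (l < rmult Om ip ev f z)%N by apply/rmult_lt.
    by split => //; apply/hs; exact: leq_ltn_trans (leq0n l) hlt.
  by case=> b [l [hb hl ->]]; exists b, l; case/rmult_lt: hl => hr hl.
have E2 : Kset (\prod_(b <- s) ('X - b%:P) ^+ rmult Om ip ev f b) = Ks.
  apply/seteqP; split => y /=.
    case=> z [l [hr hl ->]]; move: hl; rewrite mup_prod //.
    by case: ifP => hz hl; [exists z, l|rewrite ltn0 in hl].
  case=> b [l [hb hl ->]]; exists b, l; split => //; first by case/rmult_lt: hl.
  by rewrite mup_prod // hb.
by rewrite !mainA ?prod_neq0 // E1 E2.
Qed.

End Hilb.

Unset Implicit Arguments.
Set Strict Implicit.
Local Close Scope complex_scope.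
Local Open Scope ring_scope.

Theorem mainTheorem7 (R : realType) (Om : set (R[i])^o) (V : lmodType R[i])
    (ip : V -> V -> R[i]) (ev : V -> R[i] -> R[i]) (S : V -> V)
    (k : R[i] -> nat -> V) (f : {poly R[i]}) (s : seq R[i]) (vf vq : V) :
  standing_assumptions Om ip ev S ->
  (* k beta m = k_beta^(m) whenever beta is reproducible of order m *)
  (forall beta m, reproducible Om ip ev beta m -> is_kernel Om ip ev beta m (k beta m)) ->
  f != 0 ->
  (* s lists the distinct points beta_1, ..., beta_n of R(f); r_j = rmult f beta_j >= 1 *)
  uniq s ->
  (forall beta, beta \in s <-> (0 < rmult Om ip ev f beta)%N) ->
  (* vf is f, vq is prod_{beta in R(f)} (z - beta), as elements of H *)
  is_poly_elt ev Om vf f ->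
  is_poly_elt ev Om vq (\prod_(beta <- s) ('X - beta%:P) ^+ rmult Om ip ev f beta) ->
  cyc ip S vf = cyc ip S vq /\
  cyc ip S vf = orth ip (lspan [set x | exists beta l,
                 [/\ beta \in s, (l < rmult Om ip ev f beta)%N & x = k beta l]]).
Proof.
case=> _ [ipL [ipC [ipge [ipeq [_ [evL [evinj [_ [_ [Selt [Sbnd [pex dens]]]]]]]]]]]].
move=> hk f0 us hs hvf hvq.
rewrite (Pv_uniq evinj pex hvf) (Pv_uniq evinj pex hvq).
exact: (final ipL ipC ipge ipeq evL evinj Selt Sbnd pex hk dens f0 us hs).
Qed.
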